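(* Let $W\in\mathbb{R}^{m\times n}$ with columns $W_1,\dots,W_n$ and $F:=WW^\top$. Assume Spectral Localization holds for all features: for every $i\in\{1,\dots,n\}$ there is $\lambda(i)>0$ with $FW_i=\lambda(i)W_i$. Let $\lambda_1,\dots,\lambda_r$ be the distinct positive eigenvalues of $F$, and set $$C_k:=\{i:\lambda(i)=\lambda_k\},\qquad V_k:=\operatorname{span}\{W_i:i\in C_k\}.$$ Then $\{C_k\}_{k=1}^r$ partitions $\{1,\dots,n\}$, the subspaces $V_k$ are pairwise orthogonal, and $$F=\sum_{k=1}^r\lambda_k P_{V_k}\quad\text{on }\operatorname{Im}(W),\qquad F=0\text{ on }\ker(F),$$ where $P_{V_k}$ is the orthogonal projector onto $V_k$. Moreover, for each $k$, $$\sum_{i\in C_k}W_iW_i^\top=\lambda_k I\quad\text{on }V_k,$$ i.e. the vectors $(W_i)_{i\in C_k}$ form a tight frame for $V_k$ with frame constant $\lambda_k$.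
   Context: A family of vectors $(w_i)$ spanning a subspace $V$ is a tight frame for $V$ with constant $\lambda$ if $\sum_i w_iw_i^\top$ acts as $\lambda$ times the identity on $V$. *)

(* Defs.v *)
From HB Require Import structures.
From mathcomp Require Import all_boot all_order all_algebra.
Set Implicit Arguments. Unset Strict Implicit. Unset Printing Implicit Defensive.
Import Order.TTheory GRing.Theory Num.Theory.
Local Open Scope ring_scope.

(* Conventions: vectors of R^m are column vectors 'cV_m; a subspace of R^m is
   represented (mxalgebra style) by a square matrix V : 'M_m whose ROW space is
   the subspace; a column vector x belongs to V iff (x^T <= V)%MS. *)

Definition in_sub (R : fieldType) (m : nat) (x : 'cV[R]_m) (V : 'M[R]_m) : bool :=
  (x^T <= V)%MS.

Definition span_of (R : fieldType) (m : nat) (I : finType) (S : {set I})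
  (w : I -> 'cV[R]_m) : 'M[R]_m := (\sum_(i in S) <<(w i)^T>>)%MS.

Definition orth_proj (R : realFieldType) (m : nat) (V P : 'M[R]_m) : Prop :=
  forall x : 'cV[R]_m,
    in_sub (P *m x) V /\
    (forall v : 'cV[R]_m, in_sub v V -> v^T *m (x - P *m x) = 0).

Definition tight_frame (R : realFieldType) (m : nat) (I : finType) (S : {set I})
  (w : I -> 'cV[R]_m) (V : 'M[R]_m) (c : R) : Prop :=
  (V == span_of S w)%MS /\
  (forall x : 'cV[R]_m, in_sub x V ->
     (\sum_(i in S) w i *m (w i)^T) *m x = c *: x).

(* Main.v *)
Require Import Defs.
From HB Require Import structures.
From mathcomp Require Import all_boot all_order all_algebra.
Import Order.TTheory GRing.Theory Num.Theory.
Local Open Scope ring_scope.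

Lemma norm_cV0 (R : realFieldType) (m : nat) (x : 'cV[R]_m) :
  x^T *m x = 0 -> x = 0.
Proof.
move=> hx; apply/matrixP => i j; rewrite ord1 [RHS]mxE.
have := congr1 (fun M : 'M_1 => M 0 0) hx; rewrite !mxE => h.
have hge : forall k : 'I_m, predT k -> 0 <= x^T 0 k * x k 0.
  by move=> k _; rewrite mxE -expr2 sqr_ge0.
have := psumr_eq0P hge h (i:=i) isT.
by rewrite mxE => /eqP; rewrite mulf_eq0 orbb => /eqP.
Qed.

Theorem theorem3 (R : realFieldType) (m n : nat) (W : 'M[R]_(m, n))
  (lam : 'I_n -> R)
  (hnz : forall i, col i W != 0)
  (hpos : forall i, 0 < lam i)
  (heig : forall i, (W *m W^T) *m col i W = lam i *: col i W)
  (s : seq R) (s_uniq : uniq s)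
  (s_spec : forall a : R, a \in s = (0 < a) && eigenvalue (W *m W^T) a) :
  let F := W *m W^T in
  let r := size s in
  let C := fun k : 'I_r => [set i : 'I_n | lam i == s`_k] in
  let V := fun k : 'I_r => span_of (C k) (fun i => col i W) in
  partition [set C k | k : 'I_r] [set: 'I_n]
  /\ (forall k l : 'I_r, k != l -> forall x y : 'cV[R]_m,
        in_sub x (V k) -> in_sub y (V l) -> x^T *m y = 0)
  /\ (forall P : 'I_r -> 'M[R]_m, (forall k, orth_proj (V k) (P k)) ->
        forall y : 'cV[R]_n,
          F *m (W *m y) = \sum_(k < r) s`_k *: (P k *m (W *m y)))
  /\ (forall x : 'cV[R]_m, F *m x = 0 -> F *m x = 0)
  /\ (forall k : 'I_r,
        tight_frame (C k) (fun i => col i W) (V k) s`_k).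
Proof.
move=> F r C V.
set w := fun i => col i W.
have hFT : F^T = F by rewrite /F trmx_mul trmxK.
have hFsum : F = \sum_i w i *m (w i)^T.
  apply/matrixP => a b; rewrite !mxE summxE; apply: eq_bigr => i _.
  by rewrite !mxE big_ord1 !mxE.
have hrow : forall x : 'cV_m, x^T *m F = (F *m x)^T by move=> x; rewrite trmx_mul hFT.
have hmem : forall i, lam i \in s.
  move=> i; rewrite s_spec hpos /=; apply/eigenvalueP; exists (w i)^T.
    by rewrite hrow /w heig linearZ.
  by rewrite trmx_eq0; apply: hnz.
have hp : forall i, (index (lam i) s < r)%N by move=> i; rewrite index_mem.
pose p := fun i => Ordinal (hp i).
have hpC : forall i k, (i \in C k) = (p i == k).
  move=> i k; rewrite inE; apply/eqP/eqP => [h| <-].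
    by apply: val_inj; rewrite /= h index_uniq.
  by rewrite /= nth_index.
have hsub : forall k i, i \in C k -> ((w i)^T <= V k)%MS.
  by move=> k i hi; rewrite /V /span_of; apply: (sumsmx_sup i) => //; rewrite genmxE.
have hVeig : forall k x, in_sub x (V k) -> F *m x = s`_k *: x.
  move=> k x hx.
  have hE : (V k <= eigenspace F s`_k)%MS.
    apply/sumsmx_subP => i; rewrite inE => /eqP hi; rewrite genmxE.
    by apply/eigenspaceP; rewrite hrow /w heig hi linearZ.
  have := submx_trans hx hE => /eigenspaceP; rewrite hrow => h.
  by apply: trmx_inj; rewrite h linearZ.
have hdist : forall k l : 'I_r, k != l -> s`_k != s`_l.
  by move=> k l hkl; rewrite nth_uniq.
have horth : forall k l : 'I_r, k != l -> forall x y : 'cV[R]_m,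
        in_sub x (V k) -> in_sub y (V l) -> x^T *m y = 0.
  move=> k l hkl x y hx hy.
  have e1 : x^T *m (F *m y) = s`_l *: (x^T *m y) by rewrite (hVeig l) // scalemxAr.
  have e2 : x^T *m (F *m y) = s`_k *: (x^T *m y).
    by rewrite mulmxA hrow (hVeig k) // linearZ /= scalemxAl.
  have : (s`_k - s`_l) *: (x^T *m y) = 0 by rewrite scalerBl -e1 -e2 subrr.
  by move/eqP; rewrite scaler_eq0 subr_eq0 (negbTE (hdist _ _ hkl)) /= => /eqP.
have hwin : forall i, in_sub (w i) (V (p i)) by move=> i; apply: hsub; rewrite hpC.
have hne : forall k : 'I_r, exists i, lam i = s`_k.
  move=> k; case: (pickP (fun i => lam i == s`_k)) => [i /eqP hi | hnone].
    by exists i.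
  exfalso.
  have : s`_k \in s by rewrite mem_nth.
  rewrite s_spec => /andP [hk0 /eigenvalueP [v hv hv0]].
  have hvw : forall i, v *m w i = 0.
    move=> i.
    have e1 : v *m F *m w i = s`_k *: (v *m w i) by rewrite hv scalemxAl.
    have e2 : v *m F *m w i = lam i *: (v *m w i) by rewrite -mulmxA /w heig scalemxAr.
    have : (s`_k - lam i) *: (v *m w i) = 0 by rewrite scalerBl -e1 -e2 subrr.
    move/eqP; rewrite scaler_eq0 subr_eq0 eq_sym hnone /= => /eqP //.
  have hvW : v *m W = 0.
    apply/matrixP => a j; transitivity ((v *m w j) a 0); last by rewrite hvw !mxE.
    by rewrite !mxE; apply: eq_bigr => t _; rewrite !mxE.
  have : s`_k *: v = 0 by rewrite -hv /F mulmxA hvW mul0mx.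
  by move/eqP; rewrite scaler_eq0 (gt_eqF hk0) /= (negbTE hv0).
have hn0 : set0 \notin [set C k | k : 'I_r].
  apply/imsetP => [[k _ hk]]; have [i hi] := hne k.
  have : i \in C k by rewrite inE hi.
  by rewrite -hk inE.
split.
  rewrite /partition; apply/and3P; split.
  - apply/eqP/setP => i; rewrite inE; apply/bigcupP; exists (C (p i)).
      exact: imset_f.
    by rewrite hpC.
  - have [] // := trivIimset _ hn0.
    move=> k l _ _ hlk; rewrite -setI_eq0; apply/eqP/setP => i.
    rewrite !inE; apply/negP => /andP [/eqP h1 /eqP h2].
    by move: (hdist _ _ hlk); rewrite -h1 -h2 eqxx.
  - exact: hn0.
split; first exact: horth.
split.
  move=> P hP y.
  pose u := fun k : 'I_r => \sum_(i in C k) y i 0 *: w i.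
  have hWy : W *m y = \sum_k u k.
    have -> : W *m y = \sum_i y i 0 *: w i.
      apply/matrixP => a b; rewrite ord1 !mxE summxE.
      by apply: eq_bigr => t _; rewrite !mxE mulrC.
    rewrite (partition_big p predT) //=; apply: eq_bigr => k _.
    by apply: eq_bigl => i; rewrite hpC.
  have hu : forall k, in_sub (u k) (V k).
    move=> k; rewrite /in_sub /u linear_sum; apply: summx_sub => i hi.
    by rewrite linearZ; apply: scalemx_sub; apply: hsub.
  have hPu : forall k, P k *m (W *m y) = u k.
    move=> k; apply/eqP; rewrite -subr_eq0; apply/eqP; apply: norm_cV0.
    have [hin hort] := hP k (W *m y).
    have hd : in_sub (P k *m (W *m y) - u k) (V k).
      rewrite /in_sub linearB; apply: addmx_sub => //.
      by rewrite eqmx_opp; apply: hu.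
    have e : P k *m (W *m y) - u k
        = (W *m y - u k) - (W *m y - P k *m (W *m y)).
      by rewrite opprB [X in _ = X]addrC addrA addrNK.
    rewrite [X in _ *m X]e mulmxBr (hort _ hd) subr0.
    rewrite [X in _ *m (X - u k)]hWy (bigD1 k) //= addrC addrK mulmx_sumr big1 // => l hl.
    by apply: (horth k l) => //; rewrite eq_sym.
  rewrite hWy mulmx_sumr; apply: eq_bigr => k _.
  by rewrite -hWy hPu (hVeig k).
split; first by [].
move=> k; split.
  by apply/andP; split; apply: submx_refl.
move=> x hx; rewrite mulmx_suml.
have h := hVeig k x hx; rewrite hFsum mulmx_suml (bigID (fun i => i \in C k)) /= in h.
rewrite -h [X in _ = _ + X]big1 ?addr0 // => i hi; rewrite -mulmxA.
rewrite (horth (p i) k) ?mulmx0 //.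
by rewrite -hpC.
Qed.
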